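(* Assume $n\ge3$ and $3\le a\le n$. Let $(i_1,\dots,i_a)\in J^a$ with $i_1\prec i_2\prec\cdots\prec i_a$, and suppose it has at least one breaking pair. Let $(k,l)$ be the breaking pair with the largest value $q$ (i.e. $i_k=q$, $i_l=\bar q$, $n+k-l<q$, and no breaking pair has larger value). Then the number of entries strictly between positions $k$ and $l$ equals $n-q$, i.e. $l-k-1=n-q$.
   Context: Let $J=\{1\prec2\prec\cdots\prec n\prec\bar n\prec\cdots\prec\bar2\prec\bar1\}$ be a totally ordered set of $2n$ symbols. For a sequence $(i_1,\dots,i_a)\in J^a$, a breaking pair is a pair of positions $k<l$ with $i_k=c$ and $i_l=\bar c$ for some $1\le c\le n$ such that $n+k-l<c$; its value is $c$. *)

(* Defs.v *)
From mathcomp Require Import all_boot.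
Set Implicit Arguments. Unset Strict Implicit. Unset Printing Implicit Defensive.

(* Symbols of J: [JU c] is the unbarred symbol c, [JB c] the barred symbol \bar c
   (for 1 <= c <= n). *)
Inductive Jsym := JU of nat | JB of nat.

Definition Jvalid (n : nat) (j : Jsym) : bool :=
  match j with JU c | JB c => (1 <= c <= n) end.

Definition Jlt (j1 j2 : Jsym) : bool :=
  match j1, j2 with
  | JU c, JU d => c < d
  | JU _, JB _ => true
  | JB _, JU _ => false
  | JB c, JB d => d < c
  end.

(* A sequence (i_1,...,i_a) in J^a is represented by i : nat -> Jsym,
   position k (1 <= k <= a) holding i k. *)

Definition breaking_pair (n a : nat) (i : nat -> Jsym) (k l c : nat) : Prop :=
  [/\ (1 <= k < l) && (l <= a), 1 <= c <= n,
      i k = JU c, i l = JB c & n + k - l < c].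

(* Main.v *)
Require Import Defs.
From mathcomp Require Import all_boot.
From mathcomp Require Import zify.

Definition rk (n : nat) (x : Jsym) : nat :=
  match x with JU c => c | JB c => (2 * n).+1 - c end.

Lemma Jlt_rk n x y : Jvalid n x -> Jvalid n y -> Jlt x y -> rk n x < rk n y.
Proof. case: x => c; case: y => d /= /andP[? ?] /andP[? ?] H; lia. Qed.

Lemma rk_valid n x : Jvalid n x -> 1 <= rk n x <= 2 * n.
Proof. case: x => c /= /andP[? ?]; lia. Qed.

Lemma rk_JU n x m : Jvalid n x -> rk n x = m -> m <= n -> x = JU m.
Proof. case: x => c /= /andP[? ?] H ?; [by rewrite H| lia]. Qed.

Lemma rk_JB n x m : Jvalid n x -> rk n x = (2 * n).+1 - m -> 1 <= m <= n -> x = JB m.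
Proof. case: x => c /= /andP[? ?] H ?; [lia| congr JB; lia]. Qed.

Theorem mainTheorem16 (n a : nat) (i : nat -> Jsym) :
  3 <= n -> 3 <= a <= n ->
  (forall k, 1 <= k <= a -> Jvalid n (i k)) ->
  (forall k, 1 <= k < a -> Jlt (i k) (i k.+1)) ->
  (exists k l c, breaking_pair n a i k l c) ->
  forall k l q, breaking_pair n a i k l q ->
  (forall k' l' c', breaking_pair n a i k' l' c' -> c' <= q) ->
  l - k - 1 = n - q.
Proof.
move=> Hn Ha Hv Hlt _ k l q Hb Hmax.
pose r t := rk n (i t).
have mono : forall t t', 1 <= t -> t < t' -> t' <= a -> r t < r t'.
  move=> t t' H1 H2 H3; elim: t' H2 H3 => [|t' IH] H2 H3; first lia.
  have step : r t' < r t'.+1.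
    apply: Jlt_rk; [apply: Hv; lia | apply: Hv; lia | apply: Hlt; lia].
  case: (ltnP t t') => Htt; first by have := IH Htt ltac:(lia); lia.
  have -> : t = t' by lia. exact: step.
have win : forall d m p s, n.+1 - m <= d -> 1 <= p -> s <= a -> p <= s ->
    (forall t, p <= t <= s -> m <= r t <= (2 * n).+1 - m) ->
    n.+1 < s - p + 1 + m ->
    exists k' l' c, breaking_pair n a i k' l' c /\ m <= c.
  elim=> [|d IH] m p s Hd Hp Hs Hps Hr Hsz.
    have := Hr p ltac:(lia); lia.
  case: (leqP m n) => Hmn; last by have := Hr p ltac:(lia); lia.
  case: (eqVneq (r p) m) => Hrp.
    case: (eqVneq (r s) ((2 * n).+1 - m)) => Hrs.
      exists p, s, m; split => //; split.
      - apply/andP; split; [apply/andP; split|]; lia.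
      - have := Hr p ltac:(lia); have := @rk_valid n (i p) (Hv p ltac:(lia)); rewrite /r.
        move=> ? ?; apply/andP; split; lia.
      - apply: rk_JU; [apply: Hv; lia | exact: Hrp | lia].
      - have := Hr p ltac:(lia); have := @rk_valid n (i p) (Hv p ltac:(lia)); rewrite /r => ? ?.
        apply: rk_JB; [apply: Hv; lia | exact: Hrs | lia].
      - lia.
    have [k' [l' [c [Hb' Hc]]]] : exists k' l' c, breaking_pair n a i k' l' c /\ m.+1 <= c.
      apply: (IH m.+1 p.+1 s); try lia.
      move=> t Ht; have := Hr t ltac:(lia); have := Hr s ltac:(lia).
      have := mono p t ltac:(lia) ltac:(lia) ltac:(lia).
      move/eqP: Hrs => Hrs.
      case: (eqVneq t s) => [->|Hts]; first lia.
      have := mono t s ltac:(lia) ltac:(lia) ltac:(lia). lia.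
    exists k', l', c; split => //; lia.
  have [k' [l' [c [Hb' Hc]]]] : exists k' l' c, breaking_pair n a i k' l' c /\ m.+1 <= c.
    apply: (IH m.+1 p s.-1); try lia.
    move=> t Ht; have := Hr t ltac:(lia); have := Hr p ltac:(lia); have := Hr s ltac:(lia).
    have := mono t s ltac:(lia) ltac:(lia) ltac:(lia).
    move/eqP: Hrp => Hrp.
    case: (eqVneq p t) => [<-|Hpt]; first lia.
    have := mono p t ltac:(lia) ltac:(lia) ltac:(lia). lia.
  exists k', l', c; split => //; lia.
case: Hb => /andP[/andP[Hk Hkl] Hla] /andP[Hq1 Hqn] Hik Hil Hbr.
have rk_k : r k = q by rewrite /r Hik.
have rk_l : r l = (2 * n).+1 - q by rewrite /r Hil.
case: (leqP (l - k - 1) (n - q)) => Hle; first lia.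
have [k' [l' [c [Hb' Hc]]]] := win n q.+1 k.+1 l.-1 ltac:(lia) ltac:(lia) ltac:(lia) ltac:(lia)
  (fun t Ht => ltac:(have := mono k t ltac:(lia) ltac:(lia) ltac:(lia);
                     have := mono t l ltac:(lia) ltac:(lia) ltac:(lia); lia)) ltac:(lia).
have := Hmax _ _ _ Hb'; lia.
Qed.
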